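(* For any data as described in the context (any integers $I\ge 2$, $N^{\mathsf M},N^{\mathsf R}\ge 1$, $L\ge1$, $B_j\ge 1$, any discount factor $\delta\in(0,1)$, any real cost, yield and salvage parameters, any spot prices $s^l_i\in\mathbb{R}^3_+$, any real penalty coefficients $\Delta^l_{i,j,b}$, and any initial mode $x_0\in\{\mathsf O,\mathsf M_{N^{\mathsf M}}\}$), the pathwise linear program (PLP) has a finite optimal objective function value and at least one bounded optimal solution.
   Context: Stages are $\mathcal{I}=\{0,1,\dots,I-1\}$. Operating modes are $\mathsf A$ (abandoned), $\mathsf M_1,\dots,\mathsf M_{N^{\mathsf M}}$ (mothballing/mothballed), $\mathsf O$ (operational), $\mathsf R_1,\dots,\mathsf R_{N^{\mathsf R}-1}$ (reactivating). Let $\mathcal{X}'=\{\mathsf O,\mathsf M_{N^{\mathsf M}}\}$ and $\mathcal{X}''=\mathcal{X}'\cup\{\mathsf A\}$. Feasible action sets $\mathcal{A}_i(x)$ for $x\in\mathcal{X}''$: for $i\le I-2$, $\mathcal{A}_i(\mathsf O)=\{\mathsf A,\mathsf M_1,\mathsf P,\mathsf S\}$ if $i\le I-1-N^{\mathsf M}$ and $\{\mathsf A,\mathsf P,\mathsf S\}$ otherwise; $\mathcal{A}_i(\mathsf M_{N^{\mathsf M}})=\{\mathsf A,\mathsf M_{N^{\mathsf M}},\mathsf R_1\}$ if $i\le I-1-N^{\mathsf R}$ and $\{\mathsf A,\mathsf M_{N^{\mathsf M}}\}$ otherwise; $\mathcal{A}_i(\mathsf A)=\{\mathsf A\}$; and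 $\mathcal{A}_{I-1}(x)=\{\mathsf A\}$ for all $x$. For spot prices $s=(s^{C},s^{E},s^{N})\in\mathbb{R}^3_+$ and real constants $Q,\gamma_C,\gamma_N,\mathsf C_{\mathsf P},\mathsf C_{\mathsf S},\mathsf C_{\mathsf M},\mathsf I_{\mathsf M},\mathsf I_{\mathsf R},S$, the reward is $r(\mathsf O,s,\mathsf P)=(s^E-\gamma_C s^C-\gamma_N s^N)Q-\mathsf C_{\mathsf P}$, $r(\mathsf O,s,\mathsf S)=-\mathsf C_{\mathsf S}$, $r(\mathsf O,s,\mathsf M_1)=-\mathsf I_{\mathsf M}$, $r(\mathsf M_{N^{\mathsf M}},s,\mathsf M_{N^{\mathsf M}})=-\mathsf C_{\mathsf M}$, $r(\mathsf M_{N^{\mathsf M}},s,\mathsf R_1)=-\mathsf I_{\mathsf R}$, $r(\mathsf O,s,\mathsf A)=r(\mathsf M_{N^{\mathsf M}},s,\mathsf A)=S$, $r(\mathsf A,s,\mathsf A)=0$. The modified transition $f'(x,a)$ equals $\mathsf O$ for $(x,a)\in\{(\mathsf O,\mathsf P),(\mathsf O,\mathsf S),(\mathsf M_{N^{\mathsf M}},\mathsf R_1)\}$, equals $\mathsf M_{N^{\mathsf M}}$ for $(x,a)\in\{(\mathsf O,\mathsf M_1),(\mathsf M_{N^{\mathsf M}},\mathsf M_{N^{\mathsf M}})\}$, and equals $\mathsf A$ when $a=\mathsf A$. The stage transition is $g(i,x,a)=i+N^{\mathsf M}$ if $(x,a)=(\mathsf O,\mathsf M_1)$, $i+N^{\mathsf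 R}$ if $(x,a)=(\mathsf M_{N^{\mathsf M}},\mathsf R_1)$, and $i+1$ otherwise. Data: $L$ sample paths indexed by $l\in\mathcal{L}=\{1,\dots,L\}$, with spot prices $s^l_i\in\mathbb{R}^3_+$ for each $i\in\mathcal{I}$, and real penalty coefficients $\Delta^l_{i,j,b}$ for $i<j$, $b\in\mathcal{B}_j=\{1,\dots,B_j\}$ (in the paper, $\Delta^l_{i,j,b}=\delta^{j-i}(\phi_{j,b}(F^l_j)-\mathbb{E}[\phi_{j,b}(F_j)\mid F^l_i])$ for basis functions $\phi_{j,b}$ of simulated forward curves $F^l$). Decision variables: weights $\beta_{j,x,b}\in\mathbb{R}$ for $j\in\{1,\dots,I-2\}$, $x\in\mathcal{X}'$, $b\in\mathcal{B}_j$; and $U^l_0(x_0)$ and $U^l_i(x)$ for $l\in\mathcal{L}$, $i\in\{1,\dots,I-1\}$, $x\in\mathcal{X}''$. For $(l,i,x,a)$ let $j=g(i,x,a)$, $x'=f'(x,a)$, and define the penalty $\pi^l_i(x,a;\beta)=\sum_{b\in\mathcal{B}_j}\beta_{j,x',b}\Delta^l_{i,j,b}$ if $x'\in\mathcal{X}'$ and $j\le I-2$, and $0$ otherwise. PLP is: minimize $\frac1L\sum_{l\in\mathcal{L}}U^l_0(x_0)$ over $(\beta,U)$ subject to, for all $l$: $U^l_0(x_0)\ge r(x_0,s^l_0,a)-\pi^l_0(x_0,a;\beta)+\delta U^l_{g(0,x_0,a)}(f'(x_0,a))$ for all $a\in\mathcal{A}_0(x_0)$; $U^l_i(x)\ge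 r(x,s^l_i,a)-\pi^l_i(x,a;\beta)+\delta U^l_{g(i,x,a)}(f'(x,a))$ for all $i\in\{1,\dots,I-2\}$, $x\in\mathcal{X}''$, $a\in\mathcal{A}_i(x)$; and $U^l_{I-1}(x)\ge r(x,s^l_{I-1},\mathsf A)$ for all $x\in\mathcal{X}''$. *)

(* Defs.v *)
From Stdlib Require Import Reals List Arith.
Open Scope R_scope.

Inductive Mode := MO (* operational *) | MM (* M_{N^M}, mothballed *) | MA (* abandoned *).

Inductive Action := aA | aM1 | aP | aS | aMN | aR1.

(* Problem data. Indices l, i, j, b are natural numbers; only
   l in 1..L, i in 0..I-1, 1 <= j <= I-2, b in 1..B j are used. *)
Record PLPData := {
  I : nat; NM : nat; NR : nat; L : nat;
  B : nat -> nat;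
  delta : R;
  Q : R; gammaC : R; gammaN : R;
  CP : R; CS : R; CM : R; IM : R; IR : R; Salv : R;
  sC : nat -> nat -> R;
  sE : nat -> nat -> R;
  sN : nat -> nat -> R;
  Delta : nat -> nat -> nat -> nat -> R;
  x0 : Mode
}.

Definition feasible_action (d : PLPData) (i : nat) (x : Mode) (a : Action) : Prop :=
  if Nat.eqb (S i) (I d) then a = aA
  else match x with
       | MO => a = aA \/ a = aP \/ a = aS \/ (a = aM1 /\ (i + NM d + 1 <= I d)%nat)
       | MM => a = aA \/ a = aMN \/ (a = aR1 /\ (i + NR d + 1 <= I d)%nat)
       | MA => a = aA
       end.

(* Reward r(x, s^l_i, a); value on infeasible pairs is irrelevant (0). *)
Definition reward (d : PLPData) (l i : nat) (x : Mode) (a : Action) : R :=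
  match x, a with
  | MO, aP => (sE d l i - gammaC d * sC d l i - gammaN d * sN d l i) * Q d - CP d
  | MO, aS => - CS d
  | MO, aM1 => - IM d
  | MM, aMN => - CM d
  | MM, aR1 => - IR d
  | MO, aA => Salv d
  | MM, aA => Salv d
  | MA, aA => 0
  | _, _ => 0
  end.

Definition ftrans (x : Mode) (a : Action) : Mode :=
  match x, a with
  | _, aA => MA
  | MO, aP | MO, aS | MM, aR1 => MO
  | MO, aM1 | MM, aMN => MM
  | _, _ => MA
  end.

Definition gtrans (d : PLPData) (i : nat) (x : Mode) (a : Action) : nat :=
  match x, a with
  | MO, aM1 => (i + NM d)%nat
  | MM, aR1 => (i + NR d)%nat
  | _, _ => S i
  end.

Definition sum1 (n : nat) (f : nat -> R) : R :=
  fold_right Rplus 0 (map f (seq 1 n)).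

Record PLPVar := {
  beta : nat -> Mode -> nat -> R;
  U0 : nat -> R;                    (* U0 l = U^l_0(x0) *)
  U : nat -> nat -> Mode -> R       (* U l i x = U^l_i(x), i >= 1 *)
}.

Definition penalty (d : PLPData) (v : PLPVar) (l i : nat) (x : Mode) (a : Action) : R :=
  let j := gtrans d i x a in
  let x' := ftrans x a in
  match x' with
  | MA => 0
  | _ => if Nat.leb j (I d - 2) then sum1 (B d j) (fun b => beta v j x' b * Delta d l i j b)
         else 0
  end.

Definition PLP_feasible (d : PLPData) (v : PLPVar) : Prop :=
  forall l : nat, (1 <= l <= L d)%nat ->
    (forall a, feasible_action d 0 (x0 d) a ->
       U0 v l >= reward d l 0 (x0 d) a - penalty d v l 0 (x0 d) a
                 + delta d * U v l (gtrans d 0 (x0 d) a) (ftrans (x0 d) a))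
    /\ (forall i x a, (1 <= i <= I d - 2)%nat -> feasible_action d i x a ->
       U v l i x >= reward d l i x a - penalty d v l i x a
                    + delta d * U v l (gtrans d i x a) (ftrans x a))
    /\ (forall x, U v l (I d - 1)%nat x >= reward d l (I d - 1)%nat x aA).

Definition PLP_objective (d : PLPData) (v : PLPVar) : R :=
  / INR (L d) * sum1 (L d) (fun l => U0 v l).

(* Main.v *)
Require Import Defs.
From Stdlib Require Import Reals List Arith Lra Lia Psatz FunctionalExtensionality.
Import ListNotations.
Open Scope R_scope.

Inductive Var := Vt | Vbeta (j : nat) (m : Mode) (b : nat) | VU0 (l : nat) | VU (l i : nat) (m : Mode).

Definition Mode_dec (a b : Mode) : {a = b} + {a <> b}.
Proof. decide equality. Defined.

Definition Var_dec (a b : Var) : {a = b} + {a <> b}.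
Proof. decide equality; try apply Nat.eq_dec; try apply Mode_dec. Defined.

Definition upd (x : Var -> R) (w : Var) (y : R) : Var -> R :=
  fun u => if Var_dec u w then y else x u.
Definition zv : Var -> R := fun _ => 0.
Definition Sat (C : list ((Var -> R) -> R)) (x : Var -> R) : Prop :=
  forall g, In g C -> g x <= 0.
Definition aff (g : (Var -> R) -> R) : Prop :=
  forall w, exists c, forall x y, g (upd x w y) = g (upd x w 0) + c * y.
Definition coef (g : (Var -> R) -> R) w := g (upd zv w 1) - g (upd zv w 0).

Lemma aff_coef g w : aff g -> forall x y, g (upd x w y) = g (upd x w 0) + coef g w * y.
Proof.
  intros H. destruct (H w) as [c Hc].
  assert (E : c = coef g w) by (unfold coef; rewrite (Hc zv 1); ring).
  subst c; auto.
Qed.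

Lemma upd_same x w : upd x w (x w) = x.
Proof. apply functional_extensionality; intro u; unfold upd; destruct Var_dec; subst; auto. Qed.

Lemma aff_const c : aff (fun _ => c).
Proof. intro w; exists 0; intros; ring. Qed.
Lemma aff_proj u : aff (fun x => x u).
Proof. intro w; exists (if Var_dec u w then 1 else 0); intros; unfold upd; destruct Var_dec; ring. Qed.
Lemma aff_add f g : aff f -> aff g -> aff (fun x => f x + g x).
Proof. intros Hf Hg w; destruct (Hf w) as [c1 H1]; destruct (Hg w) as [c2 H2];
  exists (c1 + c2); intros; rewrite H1, H2; ring. Qed.
Lemma aff_sub f g : aff f -> aff g -> aff (fun x => f x - g x).
Proof. intros Hf Hg w; destruct (Hf w) as [c1 H1]; destruct (Hg w) as [c2 H2];
  exists (c1 - c2); intros; rewrite H1, H2; ring. Qed.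
Lemma aff_scal c f : aff f -> aff (fun x => c * f x).
Proof. intros Hf w; destruct (Hf w) as [c1 H1]; exists (c * c1); intros; rewrite H1; ring. Qed.
Lemma aff_scalr c f : aff f -> aff (fun x => f x * c).
Proof. intros Hf w; destruct (Hf w) as [c1 H1]; exists (c * c1); intros; rewrite H1; ring. Qed.
Lemma aff_lin a b f g : aff f -> aff g -> aff (fun x => a * f x + b * g x).
Proof. intros; apply aff_add; apply aff_scal; auto. Qed.
Lemma aff_fold {A} (s : list A) (f : A -> (Var -> R) -> R) :
  (forall b, aff (f b)) -> aff (fun x => fold_right Rplus 0 (map (fun b => f b x) s)).
Proof. intros H; induction s; simpl. apply aff_const. apply aff_add; auto. Qed.

Lemma fold_Rmin_le (Us : list R) a b : In b Us -> fold_right Rmin a Us <= b.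
Proof. induction Us; simpl; [intros []|intros [->|H]]. apply Rmin_l.
  eapply Rle_trans; [apply Rmin_r | auto]. Qed.
Lemma fold_Rmax_in (Ls : list R) l0 : In (fold_right Rmax l0 Ls) (l0 :: Ls).
Proof. induction Ls; simpl. auto.
  assert (H : Rmax a (fold_right Rmax l0 Ls) = a \/ Rmax a (fold_right Rmax l0 Ls) = fold_right Rmax l0 Ls)
    by (unfold Rmax; destruct Rle_dec; auto).
  simpl in IHLs. destruct H as [H|H]; rewrite H; tauto. Qed.
Lemma fold_Rmax_ge (Ls : list R) l0 a : In a (l0 :: Ls) -> a <= fold_right Rmax l0 Ls.
Proof. induction Ls; simpl. intros [->|[]]; lra.
  intros [->|[->|H]]. eapply Rle_trans; [apply IHLs; simpl; auto | apply Rmax_r].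
  apply Rmax_l. eapply Rle_trans; [apply IHLs; simpl; auto | apply Rmax_r]. Qed.

Lemma two_lists (Ls Us : list R) : (forall a b, In a Ls -> In b Us -> a <= b) ->
  exists y, (forall a, In a Ls -> a <= y) /\ (forall b, In b Us -> y <= b).
Proof.
  intros H. destruct Ls as [|l0 Ls'].
  - exists (fold_right Rmin 0 Us). split. intros a []. intros; apply fold_Rmin_le; auto.
  - exists (fold_right Rmax l0 Ls'). split. intros; apply fold_Rmax_ge; auto.
    intros b Hb. apply H; auto. apply fold_Rmax_in.
Qed.

Lemma bnd_pos c a t : 0 < c -> t <= - a / c -> c * t + a <= 0.
Proof. intros Hc Ht. assert (E : c * t + a = c * (t - (- a / c))) by (field; lra).
  rewrite E. nra. Qed.
Lemma bnd_neg c a t : c < 0 -> - a / c <= t -> c * t + a <= 0.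
Proof. intros Hc Ht. assert (E : c * t + a = c * (t - (- a / c))) by (field; lra).
  rewrite E. nra. Qed.
Lemma bnd_neg' c a t : c < 0 -> c * t + a <= 0 -> - a / c <= t.
Proof. intros Hc Ht. assert (E : c * t + a = c * (t - (- a / c))) by (field; lra).
  rewrite E in Ht. nra. Qed.
Lemma bnd_pair cp cq p0 q0 : 0 < cp -> cq < 0 -> - cq * p0 + cp * q0 <= 0 ->
  - q0 / cq <= - p0 / cp.
Proof. intros Hp Hq H.
  assert (E1 : p0 = - (- p0 / cp) * cp) by (field; lra).
  assert (E2 : q0 = - (- q0 / cq) * cq) by (field; lra).
  set (A := - p0 / cp) in *. set (B := - q0 / cq) in *.
  rewrite E1, E2 in H.
  assert (E : - cq * (- A * cp) + cp * (- B * cq) = (cp * cq) * (A - B)) by ring.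
  rewrite E in H. assert (Hk : cp * cq < 0) by nra.
  set (k := cp * cq) in *. nra. Qed.

Definition posb (c : R) : bool := if Rlt_dec 0 c then true else false.
Definition negb' (c : R) : bool := if Rlt_dec c 0 then true else false.
Definition zerob (c : R) : bool := if Req_EM_T c 0 then true else false.

Definition comb w (p q : (Var -> R) -> R) : (Var -> R) -> R :=
  fun x => (- coef q w) * p x + coef p w * q x.

Definition step w (C : list ((Var -> R) -> R)) :=
  filter (fun g => zerob (coef g w)) C ++
  flat_map (fun p => map (comb w p) (filter (fun g => negb' (coef g w)) C))
           (filter (fun g => posb (coef g w)) C).

Lemma posb_t c : posb c = true <-> 0 < c.
Proof. unfold posb; destruct Rlt_dec; split; intros; auto; try discriminate; contradiction. Qed.
Lemma negb_t c : negb' c = true <-> c < 0.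
Proof. unfold negb'; destruct Rlt_dec; split; intros; auto; try discriminate; contradiction. Qed.
Lemma zerob_t c : zerob c = true <-> c = 0.
Proof. unfold zerob; destruct Req_EM_T; split; intros; auto; try discriminate; contradiction. Qed.

Lemma step_aff w C : (forall g, In g C -> aff g) -> forall g, In g (step w C) -> aff g.
Proof.
  intros H g Hg. unfold step in Hg. apply in_app_iff in Hg. destruct Hg as [Hg|Hg].
  - apply filter_In in Hg. apply H; tauto.
  - apply in_flat_map in Hg. destruct Hg as [p [Hp Hg]]. apply in_map_iff in Hg.
    destruct Hg as [q [<- Hq]]. apply filter_In in Hp. apply filter_In in Hq.
    unfold comb. apply aff_lin; apply H; tauto.
Qed.

Lemma step_spec w C : (forall g, In g C -> aff g) ->
  forall x, (exists y, Sat C (upd x w y)) <-> Sat (step w C) x.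
Proof.
  intros HC x. split.
  - intros [y Hy] g Hg. unfold step in Hg. apply in_app_iff in Hg. destruct Hg as [Hg|Hg].
    + apply filter_In in Hg. destruct Hg as [Hg Hz]. apply zerob_t in Hz.
      pose proof (Hy g Hg) as H1. rewrite (aff_coef g w (HC g Hg)) in H1.
      rewrite <- (upd_same x w). rewrite (aff_coef g w (HC g Hg)). rewrite Hz in *. lra.
    + apply in_flat_map in Hg. destruct Hg as [p [Hp Hg]]. apply in_map_iff in Hg.
      destruct Hg as [q [<- Hq]]. apply filter_In in Hp. apply filter_In in Hq.
      destruct Hp as [Hp Hp']; destruct Hq as [Hq Hq']. apply posb_t in Hp'. apply negb_t in Hq'.
      pose proof (Hy p Hp) as H1. pose proof (Hy q Hq) as H2.
      rewrite (aff_coef p w (HC p Hp)) in H1. rewrite (aff_coef q w (HC q Hq)) in H2.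
      unfold comb. rewrite <- (upd_same x w). rewrite (aff_coef p w (HC p Hp)), (aff_coef q w (HC q Hq)).
      set (cp := coef p w) in *. set (cq := coef q w) in *.
      set (p0 := p (upd x w 0)) in *. set (q0 := q (upd x w 0)) in *.
      assert (E : - cq * (p0 + cp * x w) + cp * (q0 + cq * x w) = - cq * (p0 + cp * y) + cp * (q0 + cq * y)) by ring.
      rewrite E. nra.
  - intros HS.
    set (x0 := upd x w 0).
    destruct (two_lists (map (fun q => - q x0 / coef q w) (filter (fun g => negb' (coef g w)) C))
                        (map (fun p => - p x0 / coef p w) (filter (fun g => posb (coef g w)) C)))
      as [y [Hy1 Hy2]].
    { intros a b Ha Hb. apply in_map_iff in Ha. apply in_map_iff in Hb.
      destruct Ha as [q [<- Hq]]. destruct Hb as [p [<- Hp]].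
      assert (Hc : In (comb w p q) (step w C)).
      { unfold step. apply in_app_iff. right. apply in_flat_map. exists p. split; auto.
        apply in_map; auto. }
      pose proof (HS _ Hc) as H. unfold comb in H.
      apply filter_In in Hp. apply filter_In in Hq.
      destruct Hp as [Hp Hp']; destruct Hq as [Hq Hq']. apply posb_t in Hp'. apply negb_t in Hq'.
      rewrite <- (upd_same x w) in H. rewrite (aff_coef p w (HC p Hp)), (aff_coef q w (HC q Hq)) in H.
      apply bnd_pair; auto. fold x0 in H. 
      set (cp := coef p w) in *. set (cq := coef q w) in *. nra. }
    exists y. intros g Hg. rewrite (aff_coef g w (HC g Hg)). fold x0.
    destruct (Rtotal_order (coef g w) 0) as [Hn|[Hz|Hp]].
    + assert (Hc : - g x0 / coef g w <= y).
      { apply Hy1. apply in_map_iff. exists g. split; auto. apply filter_In. split; auto. apply negb_t; auto. }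
      pose proof (bnd_neg _ _ _ Hn Hc). lra.
    + assert (Hg' : In g (step w C)).
      { unfold step. apply in_app_iff. left. apply filter_In. split; auto. apply zerob_t; auto. }
      pose proof (HS g Hg') as H. rewrite <- (upd_same x w) in H. rewrite (aff_coef g w (HC g Hg)) in H.
      rewrite Hz in *. fold x0 in H. lra.
    + assert (Hc : y <= - g x0 / coef g w).
      { apply Hy2. apply in_map_iff. exists g. split; auto. apply filter_In. split; auto. apply posb_t; auto. }
      pose proof (bnd_pos _ _ _ Hp Hc). lra.
Qed.

Definition Agree (vs : list Var) (x y : Var -> R) := forall u, ~ In u vs -> y u = x u.

Lemma FM : forall vs C, (forall g, In g C -> aff g) ->
  exists C', (forall g, In g C' -> aff g) /\
    forall x, (exists y, Agree vs x y /\ Sat C y) <-> Sat C' x.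
Proof.
  induction vs as [|v vs IH]; intros C HC.
  - exists C. split; auto. intros x. split.
    + intros [y [Ha Hs]]. assert (y = x) by (apply functional_extensionality; intros u; apply Ha; auto).
      subst; auto.
    + intros H; exists x; split; auto. intros u _; auto.
  - destruct (IH C HC) as [C1 [HC1 E1]].
    exists (step v C1). split. apply step_aff; auto.
    intros x. rewrite <- (step_spec v C1 HC1 x). split.
    + intros [y [Ha Hs]]. exists (y v). apply E1. exists y. split; auto.
      intros u Hu. unfold upd. destruct Var_dec. subst; auto. apply Ha. simpl. intros [E|E]; [congruence | contradiction].
    + intros [r Hr]. apply E1 in Hr. destruct Hr as [y [Ha Hs]]. exists y. split; auto.
      intros u Hu. simpl in Hu. rewrite Ha by tauto. unfold upd. destruct Var_dec; [subst; tauto | reflexivity].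
Qed.

Lemma lp1 (P : list (R * R)) (t0 lb : R) :
  (forall p, In p P -> fst p * t0 + snd p <= 0) ->
  (forall t, (forall p, In p P -> fst p * t + snd p <= 0) -> lb <= t) ->
  exists ts, (forall p, In p P -> fst p * ts + snd p <= 0) /\
    forall t, (forall p, In p P -> fst p * t + snd p <= 0) -> ts <= t.
Proof.
  intros H0 Hlb.
  set (Ls := map (fun p => - snd p / fst p) (filter (fun p => negb' (fst p)) P)).
  assert (Hlow : forall t, (forall p, In p P -> fst p * t + snd p <= 0) -> forall a, In a Ls -> a <= t).
  { intros t Ht a Ha. unfold Ls in Ha. apply in_map_iff in Ha. destruct Ha as [p [<- Hp]].
    apply filter_In in Hp. destruct Hp as [Hp Hn]. apply negb_t in Hn.
    apply bnd_neg'; auto. }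
  destruct Ls as [|l0 Ls'] eqn:EL.
  - exfalso. set (t := Rmin t0 (lb - 1)).
    assert (lb <= t).
    { apply Hlb. intros p Hp. destruct (Rlt_dec (fst p) 0) as [Hn|Hn].
      + assert (In (- snd p / fst p) Ls).
        { unfold Ls. apply in_map_iff. exists p. split; [reflexivity|]. apply filter_In. split; auto. apply negb_t; auto. }
        rewrite EL in H. destruct H.
      + pose proof (H0 p Hp). assert (t <= t0) by apply Rmin_l.
        assert (fst p * t <= fst p * t0) by (apply Rmult_le_compat_l; lra). lra. }
    assert (t <= lb - 1) by apply Rmin_r. lra.
  - exists (fold_right Rmax l0 Ls'). 
    assert (Hts : forall t, (forall p, In p P -> fst p * t + snd p <= 0) -> fold_right Rmax l0 Ls' <= t).
    { intros t Ht. apply (Hlow t Ht). apply fold_Rmax_in. }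
    split; auto.
    intros p Hp. destruct (Rtotal_order (fst p) 0) as [Hn|[Hz|Hq]].
    + apply bnd_neg; auto. apply fold_Rmax_ge. rewrite <- EL. unfold Ls. apply in_map_iff. exists p. split; [reflexivity|].
      apply filter_In. split; auto. apply negb_t; auto.
    + pose proof (H0 p Hp). rewrite Hz in *. lra.
    + pose proof (H0 p Hp). pose proof (Hts t0 H0).
      assert (fst p * fold_right Rmax l0 Ls' <= fst p * t0) by (apply Rmult_le_compat_l; lra). lra.
Qed.

Definition aeqA a := match a with aA => true | _ => false end.
Definition feasb (d : PLPData) (i : nat) (x : Mode) (a : Action) : bool :=
  if Nat.eqb (S i) (I d) then aeqA a else
  match x, a with
  | MO, aA | MO, aP | MO, aS => true
  | MO, aM1 => Nat.leb (i + NM d + 1) (I d)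
  | MM, aA | MM, aMN => true
  | MM, aR1 => Nat.leb (i + NR d + 1) (I d)
  | MA, aA => true
  | _, _ => false
  end.

Lemma feasb_spec d i x a : feasible_action d i x a <-> feasb d i x a = true.
Proof.
  unfold feasible_action, feasb. destruct (Nat.eqb (S i) (I d)).
  - destruct a; simpl; split; intros; try discriminate; try reflexivity.
  - destruct x, a; simpl; rewrite ?Nat.leb_le; split; intros;
      repeat match goal with H : _ \/ _ |- _ => destruct H | H : _ /\ _ |- _ => destruct H end;
      try discriminate; auto; tauto.
Qed.

Definition toV (x : Var -> R) : PLPVar :=
  {| beta := fun j m b => x (Vbeta j m b); U0 := fun l => x (VU0 l); U := fun l i m => x (VU l i m) |}.

Definition encT (w : PLPVar) (t : R) : Var -> R :=
  fun u => match u with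
           | Vt => t
           | Vbeta j m b => beta w j m b
           | VU0 l => U0 w l
           | VU l i m => U w l i m
           end.

Lemma toV_encT w t : toV (encT w t) = w.
Proof. destruct w; reflexivity. Qed.

Definition c0 d l a (v : PLPVar) : R :=
  if feasb d 0 (x0 d) a then
    reward d l 0 (x0 d) a - penalty d v l 0 (x0 d) a
    + delta d * U v l (gtrans d 0 (x0 d) a) (ftrans (x0 d) a) - U0 v l
  else 0.
Definition c1 d l i m a (v : PLPVar) : R :=
  if feasb d i m a then
    reward d l i m a - penalty d v l i m a
    + delta d * U v l (gtrans d i m a) (ftrans m a) - U v l i m
  else 0.
Definition c2 d l m (v : PLPVar) : R := reward d l (I d - 1) m aA - U v l (I d - 1) m.

Definition allA := [aA; aM1; aP; aS; aMN; aR1].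
Definition allM := [MO; MM; MA].
Lemma inA a : In a allA. Proof. destruct a; simpl; tauto. Qed.
Lemma inM m : In m allM. Proof. destruct m; simpl; tauto. Qed.

Definition Gobj d : (Var -> R) -> R := fun x => PLP_objective d (toV x) - x Vt.
Definition C0 d := flat_map (fun l => map (fun a => fun x => c0 d l a (toV x)) allA) (seq 1 (L d)).
Definition C1 d := flat_map (fun l => flat_map (fun i => flat_map (fun m =>
   map (fun a => fun x => c1 d l i m a (toV x)) allA) allM) (seq 1 (I d - 2))) (seq 1 (L d)).
Definition C2 d := flat_map (fun l => map (fun m => fun x => c2 d l m (toV x)) allM) (seq 1 (L d)).
Definition Cl d := Gobj d :: C0 d ++ C1 d ++ C2 d.

Lemma sat_feas d x : Sat (Cl d) x -> PLP_feasible d (toV x) /\ PLP_objective d (toV x) <= x Vt.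
Proof.
  intros H. split.
  - intros l Hl. split; [|split].
    + intros a Ha. assert (Hin : In (fun x => c0 d l a (toV x)) (Cl d)).
      { right. apply in_app_iff. left. apply in_flat_map. exists l. split.
        apply in_seq; lia. apply in_map_iff. exists a. split; auto. apply inA. }
      pose proof (H _ Hin) as H1. simpl in H1. unfold c0 in H1.
      apply feasb_spec in Ha. rewrite Ha in H1. lra.
    + intros i m a Hi Ha. assert (Hin : In (fun x => c1 d l i m a (toV x)) (Cl d)).
      { right. apply in_app_iff. right. apply in_app_iff. left. apply in_flat_map. exists l. split.
        apply in_seq; lia. apply in_flat_map. exists i. split. apply in_seq; lia.
        apply in_flat_map. exists m. split. apply inM.
        apply in_map_iff. exists a. split; auto. apply inA. }
      pose proof (H _ Hin) as H1. simpl in H1. unfold c1 in H1.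
      apply feasb_spec in Ha. rewrite Ha in H1. lra.
    + intros m. assert (Hin : In (fun x => c2 d l m (toV x)) (Cl d)).
      { right. apply in_app_iff. right. apply in_app_iff. right. apply in_flat_map. exists l. split.
        apply in_seq; lia. apply in_map_iff. exists m. split; auto. apply inM. }
      pose proof (H _ Hin) as H1. simpl in H1. unfold c2 in H1. lra.
  - assert (Hin : In (Gobj d) (Cl d)) by (left; auto).
    pose proof (H _ Hin) as H1. unfold Gobj in H1. lra.
Qed.

Lemma feas_sat d w t : PLP_feasible d w -> PLP_objective d w <= t -> Sat (Cl d) (encT w t).
Proof.
  intros Hw Ht g Hg. destruct Hg as [<-|Hg].
  - unfold Gobj. rewrite toV_encT. simpl. lra.
  - apply in_app_iff in Hg. destruct Hg as [Hg|Hg].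
    + apply in_flat_map in Hg. destruct Hg as [l [Hl Hg]]. apply in_map_iff in Hg.
      destruct Hg as [a [<- _]]. rewrite toV_encT. apply in_seq in Hl.
      destruct (Hw l ltac:(lia)) as [H0 _]. unfold c0. destruct (feasb d 0 (x0 d) a) eqn:E.
      apply feasb_spec in E. specialize (H0 a E). lra. lra.
    + apply in_app_iff in Hg. destruct Hg as [Hg|Hg].
      * apply in_flat_map in Hg. destruct Hg as [l [Hl Hg]].
        apply in_flat_map in Hg. destruct Hg as [i [Hi Hg]].
        apply in_flat_map in Hg. destruct Hg as [m [_ Hg]].
        apply in_map_iff in Hg.
        destruct Hg as [a [<- _]]. rewrite toV_encT. apply in_seq in Hl. apply in_seq in Hi.
        destruct (Hw l ltac:(lia)) as [_ [H1 _]]. unfold c1. destruct (feasb d i m a) eqn:E.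
        apply feasb_spec in E. specialize (H1 i m a ltac:(lia) E). lra. lra.
      * apply in_flat_map in Hg. destruct Hg as [l [Hl Hg]]. apply in_map_iff in Hg.
        destruct Hg as [m [<- _]]. rewrite toV_encT. apply in_seq in Hl.
        destruct (Hw l ltac:(lia)) as [_ [_ H2]]. unfold c2. specialize (H2 m). lra.
Qed.

Lemma aff_pen d l i m a : aff (fun x => penalty d (toV x) l i m a).
Proof.
  unfold penalty. cbv zeta. destruct (ftrans m a); try apply aff_const;
  destruct (Nat.leb _ _); try apply aff_const; unfold sum1;
  apply aff_fold; intros b; apply aff_scalr; apply aff_proj.
Qed.

Lemma aff_Cl d : forall g, In g (Cl d) -> aff g.
Proof.
  intros g Hg. destruct Hg as [<-|Hg].
  - unfold Gobj, PLP_objective. apply aff_sub; [|apply aff_proj].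
    apply aff_scal. unfold sum1. apply aff_fold. intros b; apply aff_proj.
  - apply in_app_iff in Hg. destruct Hg as [Hg|Hg].
    + apply in_flat_map in Hg. destruct Hg as [l [Hl Hg]]. apply in_map_iff in Hg.
      destruct Hg as [a [<- _]]. unfold c0. destruct feasb; [|apply aff_const].
      apply aff_sub; [|apply aff_proj]. apply aff_add; [apply aff_sub; [apply aff_const|apply aff_pen]|].
      apply aff_scal. apply aff_proj.
    + apply in_app_iff in Hg. destruct Hg as [Hg|Hg].
      * apply in_flat_map in Hg. destruct Hg as [l [Hl Hg]].
        apply in_flat_map in Hg. destruct Hg as [i [Hi Hg]].
        apply in_flat_map in Hg. destruct Hg as [m [_ Hg]].
        apply in_map_iff in Hg.
        destruct Hg as [a [<- _]]. unfold c1. destruct feasb; [|apply aff_const].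
        apply aff_sub; [|apply aff_proj]. apply aff_add; [apply aff_sub; [apply aff_const|apply aff_pen]|].
        apply aff_scal. apply aff_proj.
      * apply in_flat_map in Hg. destruct Hg as [l [Hl Hg]]. apply in_map_iff in Hg.
        destruct Hg as [m [<- _]]. unfold c2. apply aff_sub; [apply aff_const|apply aff_proj].
Qed.

Definition vs d : list Var :=
  map VU0 (seq 1 (L d)) ++
  flat_map (fun l => flat_map (fun i => map (VU l i) allM) (seq 1 (I d - 1))) (seq 1 (L d)) ++
  flat_map (fun j => flat_map (fun m => map (Vbeta j m) (seq 1 (B d j))) [MO; MM]) (seq 1 (I d - 2)).

Lemma Vt_notin d : ~ In Vt (vs d).
Proof.
  unfold vs. intros H. apply in_app_iff in H. destruct H as [H|H].
  - apply in_map_iff in H. destruct H as [? [H _]]; discriminate.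
  - apply in_app_iff in H. destruct H as [H|H].
    + apply in_flat_map in H. destruct H as [? [_ H]]. apply in_flat_map in H.
      destruct H as [? [_ H]]. apply in_map_iff in H. destruct H as [? [H _]]; discriminate.
    + apply in_flat_map in H. destruct H as [? [_ H]]. apply in_flat_map in H.
      destruct H as [? [_ H]]. apply in_map_iff in H. destruct H as [? [H _]]; discriminate.
Qed.

Definition RelAgree d (v v' : PLPVar) : Prop :=
  (forall j m b, (1 <= j <= I d - 2)%nat -> m <> MA -> (1 <= b <= B d j)%nat -> beta v j m b = beta v' j m b) /\
  (forall l, (1 <= l <= L d)%nat -> U0 v l = U0 v' l) /\
  (forall l i m, (1 <= l <= L d)%nat -> (1 <= i <= I d - 1)%nat -> U v l i m = U v' l i m).

Lemma agree_rel d x x' : (forall u, In u (vs d) -> x u = x' u) -> RelAgree d (toV x) (toV x').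
Proof.
  intros H. unfold vs in H. split; [|split]; simpl.
  - intros j m b Hj Hm Hb. apply H. apply in_app_iff; right; apply in_app_iff; right.
    apply in_flat_map. exists j. split. apply in_seq; lia. apply in_flat_map. exists m.
    split. destruct m; simpl; tauto. apply in_map. apply in_seq; lia.
  - intros l Hl. apply H. apply in_app_iff; left. apply in_map. apply in_seq; lia.
  - intros l i m Hl Hi. apply H. apply in_app_iff; right; apply in_app_iff; left.
    apply in_flat_map. exists l. split. apply in_seq; lia. apply in_flat_map. exists i.
    split. apply in_seq; lia. apply in_map. apply inM.
Qed.

Lemma sum1_ext n f g : (forall b, (1 <= b <= n)%nat -> f b = g b) -> sum1 n f = sum1 n g.
Proof. intros H. unfold sum1. f_equal. apply map_ext_in. intros b Hb. apply in_seq in Hb. apply H; lia. Qed.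

Lemma gtrans_ge1 d i m a : (1 <= NM d)%nat -> (1 <= NR d)%nat -> (1 <= gtrans d i m a)%nat.
Proof. intros. destruct m, a; simpl; lia. Qed.

Lemma gtrans_range d i m a : (2 <= I d)%nat -> (1 <= NM d)%nat -> (1 <= NR d)%nat ->
  (i <= I d - 2)%nat -> feasb d i m a = true -> (1 <= gtrans d i m a <= I d - 1)%nat.
Proof.
  intros HI HM HR Hi H. split. apply gtrans_ge1; auto.
  unfold feasb in H. assert (E : Nat.eqb (S i) (I d) = false) by (apply Nat.eqb_neq; lia).
  rewrite E in H. destruct m, a; simpl in *; try discriminate; try lia;
  apply Nat.leb_le in H; lia.
Qed.

Lemma penalty_rel d v v' l i m a : (1 <= NM d)%nat -> (1 <= NR d)%nat ->
  RelAgree d v v' -> penalty d v l i m a = penalty d v' l i m a.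
Proof.
  intros HM HR [Hb _]. pose proof (gtrans_ge1 d i m a HM HR) as Hg.
  unfold penalty. cbv zeta. destruct (ftrans m a) eqn:Ef; try reflexivity;
  destruct (Nat.leb _ _) eqn:El; try reflexivity; apply Nat.leb_le in El;
  apply sum1_ext; intros b Hb'; rewrite Hb; auto; discriminate.
Qed.

Lemma support d (HI : (2 <= I d)%nat) (HM : (1 <= NM d)%nat) (HR : (1 <= NR d)%nat) :
  forall g, In g (Cl d) -> forall x x', (forall u, In u (Vt :: vs d) -> x u = x' u) -> g x = g x'.
Proof.
  intros g Hg x x' Hx.
  assert (HR' : RelAgree d (toV x) (toV x')) by (apply agree_rel; intros; apply Hx; simpl; auto).
  destruct HR' as [Hb [Hu0 Hu]].
  destruct Hg as [<-|Hg].
  - unfold Gobj, PLP_objective. rewrite (Hx Vt) by (simpl; auto). f_equal. f_equal.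
    apply sum1_ext. intros; apply Hu0; auto.
  - apply in_app_iff in Hg. destruct Hg as [Hg|Hg].
    + apply in_flat_map in Hg. destruct Hg as [l [Hl Hg]]. apply in_map_iff in Hg.
      destruct Hg as [a [<- _]]. apply in_seq in Hl. unfold c0. destruct feasb eqn:E; [|reflexivity].
      pose proof (gtrans_range d 0 (x0 d) a HI HM HR ltac:(lia) E).
      rewrite (penalty_rel d (toV x) (toV x')) by (auto; split; auto).
      rewrite Hu0 by lia. rewrite Hu by lia. reflexivity.
    + apply in_app_iff in Hg. destruct Hg as [Hg|Hg].
      * apply in_flat_map in Hg. destruct Hg as [l [Hl Hg]].
        apply in_flat_map in Hg. destruct Hg as [i [Hi Hg]].
        apply in_flat_map in Hg. destruct Hg as [m [_ Hg]].
        apply in_map_iff in Hg. apply in_seq in Hl. apply in_seq in Hi.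
        destruct Hg as [a [<- _]]. unfold c1. destruct feasb eqn:E; [|reflexivity].
        pose proof (gtrans_range d i m a HI HM HR ltac:(lia) E).
        rewrite (penalty_rel d (toV x) (toV x')) by (auto; split; auto).
        rewrite (Hu l i m) by lia. rewrite Hu by lia. reflexivity.
      * apply in_flat_map in Hg. destruct Hg as [l [Hl Hg]]. apply in_map_iff in Hg.
        apply in_seq in Hl.
        destruct Hg as [m [<- _]]. unfold c2. rewrite Hu by lia. reflexivity.
Qed.

Lemma sum_ge s n f c : (forall l, (s <= l < s + n)%nat -> c <= f l) ->
  INR n * c <= fold_right Rplus 0 (map f (seq s n)).
Proof.
  revert s. induction n; intros s H. simpl. lra.
  rewrite S_INR. cbn [seq map fold_right]. assert (c <= f s) by (apply H; lia).
  assert (INR n * c <= fold_right Rplus 0 (map f (seq (S s) n))) by (apply IHn; intros; apply H; lia).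
  lra.
Qed.

Lemma lower_bound d (HI : (2 <= I d)%nat) (HL : (1 <= L d)%nat) (Hdelta : 0 < delta d < 1)
  (Hx0 : x0 d = MO \/ x0 d = MM) w :
  PLP_feasible d w -> Salv d <= PLP_objective d w.
Proof.
  intros Hw.
  assert (HU0 : forall l, (1 <= l <= L d)%nat -> Salv d <= U0 w l).
  { intros l Hl. destruct (Hw l Hl) as [H0 [H1 H2]].
    assert (HA : forall k, (k <= I d - 2)%nat -> 0 <= U w l (I d - 1 - k) MA).
    { induction k; intros Hk.
      - specialize (H2 MA). replace (I d - 1 - 0)%nat with (I d - 1)%nat by lia.
        simpl in H2. lra.
      - assert (Hf : feasible_action d (I d - 1 - S k) MA aA).
        { unfold feasible_action. destruct Nat.eqb; reflexivity. }
        specialize (H1 (I d - 1 - S k)%nat MA aA ltac:(lia) Hf). simpl in H1.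
        replace (S (I d - 1 - S k)) with (I d - 1 - k)%nat in H1 by lia.
        specialize (IHk ltac:(lia)). unfold penalty in H1. simpl in H1.
        assert (0 <= delta d * U w l (I d - 1 - k) MA) by (apply Rmult_le_pos; lra). lra. }
    specialize (HA (I d - 2)%nat ltac:(lia)). replace (I d - 1 - (I d - 2))%nat with 1%nat in HA by lia.
    assert (Hf : feasible_action d 0 (x0 d) aA).
    { unfold feasible_action. destruct Nat.eqb; [reflexivity|]. destruct Hx0 as [-> | ->]; auto. }
    specialize (H0 _ Hf). unfold penalty in H0.
    assert (0 <= delta d * U w l 1 MA) by (apply Rmult_le_pos; lra).
    destruct Hx0 as [E|E]; rewrite E in H0; simpl in H0; lra. }
  unfold PLP_objective, sum1.
  assert (Hs : INR (L d) * Salv d <= fold_right Rplus 0 (map (fun l => U0 w l) (seq 1 (L d)))).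
  { apply sum_ge. intros; apply HU0; lia. }
  assert (HLp : 0 < INR (L d)) by (apply lt_0_INR; lia).
  apply Rmult_le_compat_l with (r := / INR (L d)) in Hs; [|left; apply Rinv_0_lt_compat; auto].
  replace (/ INR (L d) * (INR (L d) * Salv d)) with (Salv d) in Hs by (field; lra). exact Hs.
Qed.

Definition Bd d l i : R :=
  Rabs ((sE d l i - gammaC d * sC d l i - gammaN d * sN d l i) * Q d - CP d) +
  Rabs (CS d) + Rabs (IM d) + Rabs (CM d) + Rabs (Defs.IR d) + Rabs (Salv d).

Lemma reward_le d l i m a : reward d l i m a <= Bd d l i.
Proof.
  unfold Bd.
  pose proof (Rle_abs ((sE d l i - gammaC d * sC d l i - gammaN d * sN d l i) * Q d - CP d)).
  pose proof (Rabs_pos ((sE d l i - gammaC d * sC d l i - gammaN d * sN d l i) * Q d - CP d)).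
  pose proof (Rle_abs (- CS d)). pose proof (Rle_abs (- IM d)). pose proof (Rle_abs (- CM d)).
  pose proof (Rle_abs (- Defs.IR d)). pose proof (Rle_abs (Salv d)).
  rewrite Rabs_Ropp in *.
  pose proof (Rabs_pos (CS d)). pose proof (Rabs_pos (IM d)). pose proof (Rabs_pos (CM d)).
  pose proof (Rabs_pos (Defs.IR d)). pose proof (Rabs_pos (Salv d)).
  destruct m, a; simpl; lra.
Qed.

Lemma fold_max0_ge (s : list R) a : In a s -> a <= fold_right Rmax 0 s.
Proof. induction s; simpl. intros []. intros [->|H]. apply Rmax_l.
  eapply Rle_trans; [apply IHs; auto | apply Rmax_r]. Qed.
Lemma fold_max0_pos (s : list R) : 0 <= fold_right Rmax 0 s.
Proof. induction s; simpl. lra. eapply Rle_trans; [apply IHs | apply Rmax_r]. Qed.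

Lemma exists_feasible d (HI : (2 <= I d)%nat) (Hdelta : 0 < delta d < 1) :
  exists w, PLP_feasible d w.
Proof.
  set (M := fold_right Rmax 0 (flat_map (fun l => map (Bd d l) (seq 0 (I d))) (seq 1 (L d)))).
  assert (HM0 : 0 <= M) by apply fold_max0_pos.
  assert (HMb : forall l i, (1 <= l <= L d)%nat -> (i < I d)%nat -> forall m a, reward d l i m a <= M).
  { intros l i Hl Hi m a. eapply Rle_trans; [apply reward_le|]. apply fold_max0_ge.
    apply in_flat_map. exists l. split. apply in_seq; lia. apply in_map. apply in_seq; lia. }
  set (K := M / (1 - delta d)).
  assert (HK : K * (1 - delta d) = M) by (unfold K; field; lra).
  assert (HK0 : 0 <= K) by (unfold K; apply Rmult_le_pos; [lra | left; apply Rinv_0_lt_compat; lra]).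
  assert (HdK : 0 <= delta d * K) by (apply Rmult_le_pos; lra).
  set (w := {| beta := fun _ _ _ => 0; U0 := fun _ => K; U := fun _ _ _ => K |}).
  assert (Hpen : forall l i m a, penalty d w l i m a = 0).
  { intros. unfold penalty. cbv zeta. destruct (ftrans m a); try reflexivity;
    destruct Nat.leb; try reflexivity; unfold sum1; simpl;
    induction (seq 1 (B d _)); simpl; auto; rewrite IHl0; ring. }
  exists w. intros l Hl. split; [|split].
  - intros a _. rewrite Hpen. simpl. pose proof (HMb l 0%nat Hl ltac:(lia) (x0 d) a). lra.
  - intros i m a Hi _. rewrite Hpen. simpl. pose proof (HMb l i Hl ltac:(lia) m a). lra.
  - intros m. simpl. pose proof (HMb l (I d - 1)%nat Hl ltac:(lia) m aA). lra.
Qed.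

Theorem proposition1 (d : PLPData)
  (HI : (2 <= I d)%nat) (HNM : (1 <= NM d)%nat) (HNR : (1 <= NR d)%nat)
  (HL : (1 <= L d)%nat)
  (HB : forall j, (1 <= j <= I d - 2)%nat -> (1 <= B d j)%nat)
  (Hdelta : 0 < delta d < 1)
  (Hs : forall l i, (1 <= l <= L d)%nat -> (i <= I d - 1)%nat ->
          0 <= sC d l i /\ 0 <= sE d l i /\ 0 <= sN d l i)
  (Hx0 : x0 d = MO \/ x0 d = MM) :
  exists v : PLPVar, PLP_feasible d v /\
    forall w : PLPVar, PLP_feasible d w -> PLP_objective d v <= PLP_objective d w.
Proof.
  destruct (FM (vs d) (Cl d) (aff_Cl d)) as [C' [HaffC' HE]].
  set (phi := fun t => Sat C' (upd zv Vt t)).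
  assert (F1 : forall w, PLP_feasible d w -> phi (PLP_objective d w)).
  { intros w Hw. unfold phi. apply HE. set (t := PLP_objective d w).
    exists (fun u => if in_dec Var_dec u (vs d) then encT w t u else upd zv Vt t u). split.
    - intros u Hu. destruct in_dec; [contradiction | reflexivity].
    - intros g Hg. rewrite (support d HI HNM HNR g Hg _ (encT w t)).
      + apply (feas_sat d w t); [auto | unfold t; lra | exact Hg].
      + intros u [<-|Hu].
        * destruct in_dec as [H|H]; [exfalso; apply (Vt_notin d H)|].
          unfold upd. destruct Var_dec; [reflexivity | congruence].
        * destruct in_dec; [reflexivity | contradiction]. }
  assert (F2 : forall t, phi t -> exists y, Sat (Cl d) y /\ y Vt = t).
  { intros t Ht. apply HE in Ht. destruct Ht as [y [Ha Hy]]. exists y. split; auto.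
    rewrite (Ha Vt (Vt_notin d)). unfold upd. destruct Var_dec; congruence. }
  set (P := map (fun g => (coef g Vt, g (upd zv Vt 0))) C').
  assert (Hphi : forall t, phi t <-> forall p, In p P -> fst p * t + snd p <= 0).
  { intros t. unfold phi, Sat, P. split.
    - intros H p Hp. apply in_map_iff in Hp. destruct Hp as [g [<- Hg]]. simpl.
      pose proof (H g Hg) as H1. rewrite (aff_coef g Vt (HaffC' g Hg)) in H1. lra.
    - intros H g Hg. rewrite (aff_coef g Vt (HaffC' g Hg)).
      pose proof (H (coef g Vt, g (upd zv Vt 0)) (in_map _ _ _ Hg)) as H1. simpl in H1. lra. }
  destruct (exists_feasible d HI Hdelta) as [w0 Hw0].
  destruct (lp1 P (PLP_objective d w0) (Salv d)) as [ts [Hts Hmin]].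
  - apply Hphi. apply F1; auto.
  - intros t Ht. apply Hphi in Ht. destruct (F2 t Ht) as [y [Hy Hyt]].
    destruct (sat_feas d y Hy) as [Hf Ho]. pose proof (lower_bound d HI HL Hdelta Hx0 _ Hf). lra.
  - assert (Hp : phi ts) by (apply Hphi; auto).
    destruct (F2 ts Hp) as [y [Hy Hyt]]. destruct (sat_feas d y Hy) as [Hf Ho].
    exists (toV y). split; auto. intros w Hw.
    pose proof (Hmin _ (proj1 (Hphi _) (F1 w Hw))). lra.
Qed.
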